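(* The class of tolerance graphs contains a graph that is not a pairwise compatibility graph; i.e., tolerance graphs are not contained in PCG.
   Context: All graphs are finite and simple. A graph $G=(V,E)$ is a pairwise compatibility graph (PCG) if there exist a tree $T$ with non-negative real edge weights, whose set of leaves is exactly $V$, and two non-negative real numbers $d_{min}\le d_{max}$ such that for all distinct $u,v\in V$, $(u,v)\in E$ if and only if $d_{min}\le d_T(u,v)\le d_{max}$, where $d_T(u,v)$ is the sum of the weights of the edges on the unique path from $u$ to $v$ in $T$. A graph $G=(V,E)$ is a tolerance graph if to every node $v$ one can assign a closed interval $I_v$ of the real line and a tolerance $t_v\ge 0$ such that distinct $x,y$ are adjacent if and only if $|I_x\cap I_y|\ge \min\{t_x,t_y\}$, where $|I|$ denotes the length of the interval $I$. *)

(* Defs.v *)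
From HB Require Import structures.
From mathcomp Require Import all_boot all_order all_algebra.
From mathcomp Require Import Rstruct.
From Stdlib Require Rdefinitions.
Notation R := Rdefinitions.R.

Set Implicit Arguments. Unset Strict Implicit. Unset Printing Implicit Defensive.
Import Order.TTheory GRing.Theory Num.Theory.
Local Open Scope ring_scope.

Definition simple_graph (V : finType) (e : rel V) : Prop :=
  symmetric e /\ irreflexive e.

Definition is_tree (N : finType) (t : rel N) : Prop :=
  [/\ symmetric t, irreflexive t,
      (forall x y : N, connect t x y) &
      (forall (x : N) (p q : seq N),
          path t x p -> uniq (x :: p) ->
          path t x q -> uniq (x :: q) ->
          last x p = last x q -> p = q)].

(* leaves of the tree: nodes of degree <= 1 (degree exactly 1 as soon as the
   tree has at least two nodes; the single node of a one-node tree is a leaf). *)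
Definition is_leaf (N : finType) (t : rel N) (x : N) : bool :=
  (#|[set y | t x y]| <= 1)%N.

Definition path_weight (N : finType) (w : N -> N -> R) (x : N) (p : seq N) : R :=
  \sum_(a <- pairmap w x p) a.

Definition tree_dist (N : finType) (t : rel N) (w : N -> N -> R)
    (x y : N) (d : R) : Prop :=
  exists p : seq N, [/\ path t x p, uniq (x :: p), last x p = y
                        & path_weight w x p = d].

Definition PCG (V : finType) (e : rel V) : Prop :=
  exists (N : finType) (t : rel N) (w : N -> N -> R) (f : V -> N)
         (dmin dmax : R),
    [/\ is_tree t,
        (forall x y, w x y = w y x),
        (forall x y, t x y -> 0 <= w x y),
        injective f &
        (forall x : N, is_leaf t x <-> exists v : V, f v = x)] /\
    [/\ 0 <= dmin, dmin <= dmax &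
        (forall u v : V, u != v -> forall d : R,
            tree_dist t w (f u) (f v) d ->
            (e u v <-> (dmin <= d /\ d <= dmax)))].

Definition inter_len (a1 b1 a2 b2 : R) : R :=
  Num.max 0 (Num.min b1 b2 - Num.max a1 a2).

Definition tolerance_graph (V : finType) (e : rel V) : Prop :=
  exists (l r tol : V -> R),
    [/\ (forall v, l v <= r v),
        (forall v, 0 <= tol v) &
        (forall x y : V, x != y ->
           (e x y <-> Num.min (tol x) (tol y) <= inter_len (l x) (r x) (l y) (r y)))].

(* Main.v *)
Require Import Defs.
From HB Require Import structures.
From mathcomp Require Import all_boot all_order all_algebra.
From mathcomp Require Import Rstruct.
From mathcomp Require Import ring lra.
Set Implicit Arguments. Unset Strict Implicit. Unset Printing Implicit Defensive.
Import Order.TTheory GRing.Theory Num.Theory.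
Local Open Scope ring_scope.

Section Seqs.
Variable T : eqType.
Fixpoint lcp (s1 s2 : seq T) : seq T :=
  match s1, s2 with
  | x :: s1', y :: s2' => if x == y then x :: lcp s1' s2' else [::]
  | _, _ => [::]
  end.

Lemma lcpC s1 s2 : lcp s1 s2 = lcp s2 s1.
Proof.
elim: s1 s2 => [|x s1 IH] [|y s2] //=.
by rewrite eq_sym; case: eqP => [->|//]; rewrite IH.
Qed.

Lemma lcp_split s1 s2 : exists s1' s2',
  [/\ s1 = lcp s1 s2 ++ s1', s2 = lcp s1 s2 ++ s2' &
      forall z a b, s1' = z :: a -> s2' = z :: b -> False].
Proof.
elim: s1 s2 => [|x s1 IH] [|y s2] /=.
- by exists [::], [::].
- by exists [::], (y :: s2).
- by exists (x :: s1), [::].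
- case: eqP => [exy|nxy].
  + subst y. have [s1' [s2' [E1 E2 H]]] := IH s2.
    by exists s1', s2'; split => //=; congr (_ :: _).
  + by exists (x :: s1), (y :: s2); split => // z a b [ez _] [ez' _]; apply: nxy; congruence.
Qed.

Lemma lcp_ultra s1 s2 s3 :
  [\/ lcp s1 s2 = lcp s1 s3 /\ exists r, lcp s2 s3 = lcp s1 s2 ++ r,
      lcp s1 s2 = lcp s2 s3 /\ exists r, lcp s1 s3 = lcp s1 s2 ++ r |
      lcp s1 s3 = lcp s2 s3 /\ exists r, lcp s1 s2 = lcp s1 s3 ++ r].
Proof.
elim: s1 s2 s3 => [|x s1 IH] [|y s2] [|z s3] /=;
  try by apply: Or31; split => //; eexists; reflexivity.
- by apply: Or32; split => //; eexists; reflexivity.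
- by apply: Or33; split => //; eexists; reflexivity.
- case: (boolP (x == y)) => [/eqP exy|nxy]; case: (boolP (x == z)) => [/eqP exz|nxz];
    case: (boolP (y == z)) => [/eqP eyz|nyz]; subst;
    rewrite ?eqxx ?(negbTE nxy) ?(negbTE nxz) ?(negbTE nyz) //=;
    try (by move: nxy; rewrite eqxx); try (by move: nxz; rewrite eqxx);
    try (by move: nyz; rewrite eqxx).
  + case: (IH s2 s3) => [[E [r Er]]|[E [r Er]]|[E [r Er]]].
    * by apply: Or31; rewrite E; split => //; exists r; rewrite Er E.
    * by apply: Or32; rewrite E; split => //; exists r; rewrite Er E.
    * by apply: Or33; rewrite E; split => //; exists r; rewrite Er E.
  + by apply: Or33; split => //; eexists; reflexivity.
  + by apply: Or32; split => //; eexists; reflexivity.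
  + by apply: Or31; split => //; eexists; reflexivity.
  + by apply: Or31; split => //; eexists; reflexivity.
Qed.
Lemma cat_lcancel (c a b : seq T) : c ++ a = c ++ b -> a = b.
Proof. by elim: c => //= x c IH [] /IH. Qed.
End Seqs.


Section Tree.
Variables (N : finType) (t : rel N) (w : N -> N -> R).
Hypothesis tsym : symmetric t.
Hypothesis wsym : forall x y, w x y = w y x.
Hypothesis wpos : forall x y, t x y -> 0 <= w x y.
Hypothesis tuniq : forall (x : N) (p q : seq N),
          path t x p -> uniq (x :: p) ->
          path t x q -> uniq (x :: q) ->
          last x p = last x q -> p = q.

Notation W := (path_weight w).

Lemma W_nil x : W x [::] = 0.
Proof. by rewrite /path_weight big_nil. Qed.

Lemma W_cons x y s : W x (y :: s) = w x y + W y s.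
Proof. by rewrite /path_weight /= big_cons. Qed.

Lemma W_cat x s1 s2 : W x (s1 ++ s2) = W x s1 + W (last x s1) s2.
Proof. by rewrite /path_weight pairmap_cat big_cat. Qed.

Lemma W_rcons x s z : W x (rcons s z) = W x s + w (last x s) z.
Proof. by rewrite -cats1 W_cat W_cons W_nil addr0. Qed.

Lemma W_ge0 x s : path t x s -> 0 <= W x s.
Proof.
elim: s x => [|y s IH] x /=; first by rewrite W_nil.
by case/andP=> txy ps; rewrite W_cons; apply: addr_ge0; [exact: wpos | exact: IH].
Qed.

Lemma last_rev_belast (y : N) (s : seq N) : last (last y s) (rev (belast y s)) = y.
Proof.
elim: s y => [|z s IH] y //=.
by rewrite rev_cons last_rcons.
Qed.

Lemma W_rev x s : W (last x s) (rev (belast x s)) = W x s.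
Proof.
elim: s x => [|y s IH] x /=; first by rewrite !W_nil.
rewrite rev_cons W_rcons IH last_rev_belast W_cons wsym.
by rewrite addrC.
Qed.

Lemma path_rev x s : path t x s -> path t (last x s) (rev (belast x s)).
Proof.
move=> p; rewrite rev_path.
by rewrite (eq_path (e' := t)) // => a b; rewrite tsym.
Qed.

Definition sp (o : N) (p : seq N) := path t o p && uniq (o :: p).

Lemma sp_nil_last o p : sp o p -> last o p = o -> p = [::].
Proof.
case: p => [//|y p] /andP[_ u] /= l.
have := mem_last y p; rewrite l => ho.
by move: u => /= /andP[]; rewrite ho.
Qed.

Lemma disjoint_tails o c p q :
  sp o (c ++ p) -> sp o (c ++ q) ->
  (forall z a b, p = z :: a -> q = z :: b -> False) ->
  forall u, u \in p -> u \in q -> False.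
Proof.
move=> Hp Hq H u up' uq'; move: Hp Hq H.
case/splitPr: up' => p1 p2; case/splitPr: uq' => q1 q2.
move=> /andP[pp up] /andP[pq uq] H.
have E : rcons p1 u = rcons q1 u.
  apply: (@cat_lcancel _ c); apply: (tuniq (x := o)).
  - by move: pp; rewrite -cat_rcons catA cat_path => /andP[].
  - by move: up; rewrite -cat_rcons catA -cat_cons cat_uniq => /andP[].
  - by move: pq; rewrite -cat_rcons catA cat_path => /andP[].
  - by move: uq; rewrite -cat_rcons catA -cat_cons cat_uniq => /andP[].
  - by rewrite !last_cat !last_rcons.
case: (rcons_inj E) => ep; rewrite ep in H.
clear -H; case: q1 H => [|z q1] H.
  by apply: (H u p2 q2).
by apply: (H z (q1 ++ u :: p2) (q1 ++ u :: q2)).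
Qed.

Lemma mem_in_uniq_cat (o : N) c p x : uniq (o :: c ++ p) -> x \in o :: c -> x \notin p.
Proof.
rewrite -cat_cons cat_uniq => /and3P[_ hp _] xc; apply/negP => xp.
by move/hasP: hp; apply; exists x.
Qed.

Lemma dist_formula o p q : sp o p -> sp o q ->
  tree_dist t w (last o p) (last o q) (W o p + W o q - W o (lcp p q) - W o (lcp p q)).
Proof.
move=> spp spq.
have [p' [q' [Ep Eq H]]] := lcp_split p q.
set c := lcp p q in Ep Eq *.
set m := last o c.
have spp' : sp o (c ++ p') by rewrite -Ep.
have spq' : sp o (c ++ q') by rewrite -Eq.
have pm : path t m p' by move: spp' => /andP[]; rewrite cat_path => /andP[].
have qm : path t m q' by move: spq' => /andP[]; rewrite cat_path => /andP[].
have up : uniq (o :: c ++ p') by case/andP: spp'.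
have uq : uniq (o :: c ++ q') by case/andP: spq'.
have mc : m \in o :: c by apply: mem_last.
have dis := disjoint_tails spp' spq' H.
exists (rev (belast m p') ++ q').
rewrite Ep Eq !last_cat -/m; split.
- rewrite cat_path last_rev_belast qm andbT.
  exact: path_rev.
- have -> : last m p' :: rev (belast m p') ++ q' = rev (m :: p') ++ q'.
    by rewrite [m :: p']lastI rev_rcons.
  rewrite cat_uniq rev_uniq /= (mem_in_uniq_cat up mc).
  have := up; rewrite -cat_cons cat_uniq => /and3P[_ _ -> /=].
  have := uq; rewrite -cat_cons cat_uniq => /and3P[_ _ -> /=].
  rewrite andbT; apply/hasP => -[x xq]; rewrite mem_rev inE => /orP[/eqP xm|xp].
    by subst x; move: (mem_in_uniq_cat uq mc); rewrite xq.
  exact: (dis x xp xq).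
- by rewrite ?last_cat last_rev_belast.
- rewrite W_cat W_rev last_rev_belast !W_cat -/m.
  by lra.
Qed.
End Tree.


Definition ultra (V : Type) (L : V -> V -> R) x y z :=
  [\/ L x y = L x z /\ L x y <= L y z, L x y = L y z /\ L x y <= L x z |
      L x z = L y z /\ L x z <= L x y].

Lemma W_prefix (N : finType) (t : rel N) (w : N -> N -> R) :
  (forall x y, t x y -> 0 <= w x y) ->
  forall o c r s, path t o (c ++ r ++ s) -> path_weight w o c <= path_weight w o (c ++ r).
Proof.
move=> wpos o c r s; rewrite cat_path cat_path => /and3P[_ pr _].
rewrite W_cat lerDl; exact: W_ge0 pr.
Qed.

Lemma pcg_facts (V : finType) (e : rel V) (v0 : V) : PCG e ->
  exists (A : V -> R) (L : V -> V -> R) (dmin dmax : R),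
  [/\ 0 <= dmin, dmin <= dmax,
   (forall u v, u != v -> (e u v <-> (dmin <= A u + A v - L u v - L u v /\
                                     A u + A v - L u v - L u v <= dmax))),
   (forall u v, L u v = L v u) &
   (forall u v, 0 <= L u v /\ L u v <= A u)] /\
  [/\ A v0 = 0, (forall u, L v0 u = 0) & (forall x y z, ultra L x y z)].
Proof.
move=> [N [t [w [f [dmin [dmax [[[tsym tirr tconn tuniq] wsym wpos finj fleaf]
          [dmin0 dle He]]]]]]]].
set o := f v0.
have ex : forall x, exists p, sp t o p && (last o p == f x).
  move=> x; have /connectP[p pp ->] := tconn o (f x).
  case: (shortenP pp) => p' pp' up' _.
  by exists p'; rewrite /sp pp' up' eqxx.
pose P x := xchoose (ex x).
have PP : forall x, sp t o (P x) /\ last o (P x) = f x.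
  by move=> x; have /andP[-> /eqP ->] := xchooseP (ex x).
have Ppath : forall x, path t o (P x) by move=> x; case: (PP x) => /andP[].
exists (fun x => path_weight w o (P x)),
       (fun x y => path_weight w o (lcp (P x) (P y))), dmin, dmax.
split; split => //.
- move=> u v uv; case: (PP u) => su lu; case: (PP v) => sv lv.
  have := dist_formula tsym wsym tuniq su sv; rewrite lu lv => td.
  exact: He uv _ td.
- by move=> u v; rewrite lcpC.
- move=> u v; have [s1 [s2 [E1 _ _]]] := lcp_split (P u) (P v).
  have pu := Ppath u; rewrite E1 in pu.
  split.
    by move: pu; rewrite cat_path => /andP[/W_ge0 ->].
  rewrite {2}E1; apply: (W_prefix wpos (s := [::])); by rewrite cats0.
- case: (PP v0) => sv lv.
  by rewrite (sp_nil_last sv lv) W_nil.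
- by move=> u; case: (PP v0) => sv lv; rewrite (sp_nil_last sv lv) /= W_nil.
- move=> x y z; rewrite /ultra.
  have pre : forall a b r, lcp (P a) (P b) = lcp (P x) (P y) ++ r ->
      path_weight w o (lcp (P x) (P y)) <= path_weight w o (lcp (P a) (P b)).
    move=> a b r E; have [s1 [s2 [E1 _ _]]] := lcp_split (P a) (P b).
    have pa := Ppath a; rewrite E1 E -catA in pa.
    by rewrite E; apply: W_prefix pa.
  have pre2 : forall a b r, lcp (P a) (P b) = lcp (P x) (P z) ++ r ->
      path_weight w o (lcp (P x) (P z)) <= path_weight w o (lcp (P a) (P b)).
    move=> a b r E; have [s1 [s2 [E1 _ _]]] := lcp_split (P a) (P b).
    have pa := Ppath a; rewrite E1 E -catA in pa.
    by rewrite E; apply: W_prefix pa.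
  case: (lcp_ultra (P x) (P y) (P z)) => [[E [r Er]]|[E [r Er]]|[E [r Er]]].
  + by apply: Or31; rewrite E; split => //; rewrite -E; apply: pre Er.
  + by apply: Or32; rewrite E; split => //; rewrite -E; apply: pre Er.
  + by apply: Or33; rewrite E; split => //; rewrite -E; apply: pre2 Er.
Qed.


Section Tree4.
Variables (N : finType) (t : rel N) (w : N -> N -> R).
Hypothesis tsym : symmetric t.
Hypothesis wsym : forall x y, w x y = w y x.
Hypothesis wpos : forall x y, t x y -> 0 <= w x y.
Hypothesis tconn : forall x y : N, connect t x y.
Hypothesis tuniq : forall (x : N) (p q : seq N),
          path t x p -> uniq (x :: p) ->
          path t x q -> uniq (x :: q) ->
          last x p = last x q -> p = q.

Lemma tdist_uniq x y d1 d2 : tree_dist t w x y d1 -> tree_dist t w x y d2 -> d1 = d2.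
Proof.
move=> [p [pp up lp <-]] [q [pq uq lq <-]].
by rewrite (tuniq pp up pq uq); last by rewrite lp lq.
Qed.

Lemma tdist_sym x y d : tree_dist t w x y d -> tree_dist t w y x d.
Proof.
move=> [p [pp up lp <-]]; subst y.
exists (rev (belast x p)); split.
- exact: path_rev.
- by rewrite -rev_rcons -lastI rev_uniq.
- exact: last_rev_belast.
- exact: W_rev.
Qed.

Lemma ex_sp x y : exists p, sp t x p && (last x p == y).
Proof.
have /connectP[p pp ->] := tconn x y.
case: (shortenP pp) => p' pp' up' _.
by exists p'; rewrite /sp pp' up' eqxx.
Qed.

Definition Pth x y := xchoose (ex_sp x y).
Definition Dn x y := path_weight w x (Pth x y).

Lemma Pth_sp x y : sp t x (Pth x y) /\ last x (Pth x y) = y.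
Proof. by have /andP[-> /eqP ->] := xchooseP (ex_sp x y). Qed.

Lemma Dn_tdist x y : tree_dist t w x y (Dn x y).
Proof.
case: (Pth_sp x y) => /andP[pp up] lp.
by exists (Pth x y); split.
Qed.

Lemma Dn_sym x y : Dn x y = Dn y x.
Proof. exact: tdist_uniq (Dn_tdist x y) (tdist_sym (Dn_tdist y x)). Qed.

Definition fpc (S1 S2 S3 : R) :=
  [\/ S1 = S2 /\ S3 <= S1, S1 = S3 /\ S2 <= S1 | S2 = S3 /\ S1 <= S2].

Lemma fourpc o x y z :
  fpc (Dn x y + Dn o z) (Dn x z + Dn o y) (Dn y z + Dn o x).
Proof.
pose P v := Pth o v.
have PP : forall v, sp t o (P v) /\ last o (P v) = v by move=> v; exact: Pth_sp.
have Ppath : forall v, path t o (P v) by move=> v; case: (PP v) => /andP[].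
pose A v := path_weight w o (P v).
pose L u v := path_weight w o (lcp (P u) (P v)).
have DA : forall v, Dn o v = A v by [].
have DL : forall u v, Dn u v = A u + A v - L u v - L u v.
  move=> u v; case: (PP u) => su lu; case: (PP v) => sv lv.
  have := dist_formula tsym wsym tuniq su sv; rewrite lu lv => td.
  exact: tdist_uniq (Dn_tdist u v) td.
have pre : forall u v a b r, lcp (P a) (P b) = lcp (P u) (P v) ++ r -> L u v <= L a b.
  move=> u v a b r E; have [s1 [s2 [E1 _ _]]] := lcp_split (P a) (P b).
  have pa := Ppath a; rewrite E1 E -catA in pa.
  by rewrite /L E; apply: W_prefix pa.
rewrite /fpc !DA !DL.
case: (lcp_ultra (P x) (P y) (P z)) => [[E [r Er]]|[E [r Er]]|[E [r Er]]].
- have h := pre x y y z r Er.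
  have E' : L x y = L x z by rewrite /L E.
  by apply: Or31; split; lra.
- have h := pre x y x z r Er.
  have E' : L x y = L y z by rewrite /L E.
  by apply: Or32; split; lra.
- have h := pre x z x y r Er.
  have E' : L x z = L y z by rewrite /L E.
  by apply: Or33; split; lra.
Qed.
End Tree4.


Lemma minR_nat (a b : nat) : Num.min (a%:R : R) b%:R = (minn a b)%:R.
Proof. by rewrite -natr_min minEnat. Qed.

Lemma maxR_nat (a b : nat) : Num.max (a%:R : R) b%:R = (maxn a b)%:R.
Proof. by rewrite -natr_max maxEnat. Qed.

Lemma tol_nat (t1 t2 a1 b1 a2 b2 : nat) :
  (Num.min (t1%:R : R) t2%:R <= inter_len a1%:R b1%:R a2%:R b2%:R) =
  (minn t1 t2 <= minn b1 b2 - maxn a1 a2)%N.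
Proof.
rewrite /inter_len minR_nat maxR_nat minR_nat.
set m := minn b1 b2; set M := maxn a1 a2.
case: (leqP M m) => h.
  by rewrite -natrB // max_r ?ler0n // ler_nat.
have -> : (m - M = 0)%N by apply/eqP; rewrite subn_eq0 ltnW.
rewrite max_l; last by rewrite subr_le0 ler_nat ltnW.
by rewrite -(ler_nat R) .
Qed.


Definition Lns := [:: 1; 20; 4; 19; 10; 3; 12; 7]%N.
Definition Rns := [:: 20; 54; 13; 96; 52; 31; 35; 27]%N.
Definition Tns := [:: 3; 6; 1; 4; 28; 88; 21; 18]%N.
Definition lv (v : 'I_8) := nth 0%N Lns v.
Definition rv (v : 'I_8) := nth 0%N Rns v.
Definition tv (v : 'I_8) := nth 0%N Tns v.
Definition e8 : rel 'I_8 := fun x y =>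
  (x != y) && (minn (tv x) (tv y) <= minn (rv x) (rv y) - maxn (lv x) (lv y))%N.

Lemma NE_help (a b d : R) : (false <-> a <= d /\ d <= b) -> d < a \/ b < d.
Proof.
move=> [_ H]; case: (ltP d a) => h1; first by left.
case: (ltP b d) => h2; first by right.
by have := H (conj h1 h2).
Qed.

Lemma EE_help (a b d : R) : (true <-> a <= d /\ d <= b) -> a <= d /\ d <= b.
Proof. by move=> [H _]; apply: H. Qed.

Lemma leafN {a b x1 x2 y1 y2 x3 x4 : R} : x1 < a -> x2 < a -> a <= y1 -> a <= y2 ->
  x3 < a -> x4 < a -> fpc (x1 + x2) (y1 + y2) (x3 + x4) -> False.
Proof. by move=> ? ? ? ? ? ? []  [? ?]; lra. Qed.

Lemma leafF {a b x1 x2 y1 y2 y3 y4 : R} : b < x1 -> b < x2 -> y1 <= b -> y2 <= b ->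
  y3 <= b -> y4 <= b -> fpc (x1 + x2) (y1 + y2) (y3 + y4) -> False.
Proof. by move=> ? ? ? ? ? ? []  [? ?]; lra. Qed.

Lemma not_pcg : ~ PCG e8.
Proof.
move=> [N [t [w [f [a [b [[[tsym tirr tconn tuniq] wsym wpos finj fleaf] [a0 ab He]]]]]]]].
pose D (u v : 'I_8) := Dn w tconn (f u) (f v).
have NE : forall u v, u != v -> e8 u v = false -> D u v < a \/ b < D u v.
  move=> u v uv euv; apply: NE_help; rewrite -euv.
  exact: He uv _ (Dn_tdist w tconn (f u) (f v)).
have EE : forall u v, u != v -> e8 u v = true -> a <= D u v /\ D u v <= b.
  move=> u v uv euv; apply: EE_help; rewrite -euv.
  exact: He uv _ (Dn_tdist w tconn (f u) (f v)).
have Dsym : forall u v, D u v = D v u by move=> u v; exact: Dn_sym.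
have Q : forall o x y z, fpc (D x y + D o z) (D x z + D o y) (D y z + D o x).
  by move=> o x y z; exact: fourpc.
pose v0 := @Ordinal 8 0 isT. pose v1 := @Ordinal 8 1 isT.
pose v2 := @Ordinal 8 2 isT. pose v3 := @Ordinal 8 3 isT.
pose v4 := @Ordinal 8 4 isT. pose v5 := @Ordinal 8 5 isT.
pose v6 := @Ordinal 8 6 isT. pose v7 := @Ordinal 8 7 isT.
have q1 : fpc (D v0 v1 + D v2 v3) (D v0 v2 + D v1 v3) (D v1 v2 + D v3 v0).
  by rewrite (Dsym v2 v3) (Dsym v1 v3); exact: Q v3 v0 v1 v2.
have q2 : fpc (D v4 v5 + D v6 v7) (D v4 v6 + D v5 v7) (D v5 v6 + D v7 v4).
  by rewrite (Dsym v6 v7) (Dsym v5 v7); exact: Q v7 v4 v5 v6.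
have q_01_45 : fpc (D v0 v1 + D v4 v5) (D v0 v4 + D v1 v5) (D v1 v4 + D v0 v5).
  by rewrite (Dsym v4 v5) (Dsym v1 v5) (Dsym v0 v5); exact: Q v5 v0 v1 v4.
have q_01_56 : fpc (D v0 v1 + D v5 v6) (D v0 v5 + D v1 v6) (D v1 v5 + D v0 v6).
  by rewrite (Dsym v5 v6) (Dsym v1 v6) (Dsym v0 v6); exact: Q v6 v0 v1 v5.
have q_01_67 : fpc (D v0 v1 + D v6 v7) (D v0 v6 + D v1 v7) (D v1 v6 + D v0 v7).
  by rewrite (Dsym v6 v7) (Dsym v1 v7) (Dsym v0 v7); exact: Q v7 v0 v1 v6.
have q_01_74 : fpc (D v0 v1 + D v7 v4) (D v0 v7 + D v1 v4) (D v1 v7 + D v0 v4).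
  by rewrite (Dsym v7 v4) (Dsym v1 v4) (Dsym v0 v4); exact: Q v4 v0 v1 v7.
have q_12_45 : fpc (D v1 v2 + D v4 v5) (D v1 v4 + D v2 v5) (D v2 v4 + D v1 v5).
  by rewrite (Dsym v4 v5) (Dsym v2 v5) (Dsym v1 v5); exact: Q v5 v1 v2 v4.
have q_12_56 : fpc (D v1 v2 + D v5 v6) (D v1 v5 + D v2 v6) (D v2 v5 + D v1 v6).
  by rewrite (Dsym v5 v6) (Dsym v2 v6) (Dsym v1 v6); exact: Q v6 v1 v2 v5.
have q_12_67 : fpc (D v1 v2 + D v6 v7) (D v1 v6 + D v2 v7) (D v2 v6 + D v1 v7).
  by rewrite (Dsym v6 v7) (Dsym v2 v7) (Dsym v1 v7); exact: Q v7 v1 v2 v6.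
have q_12_74 : fpc (D v1 v2 + D v7 v4) (D v1 v7 + D v2 v4) (D v2 v7 + D v1 v4).
  by rewrite (Dsym v7 v4) (Dsym v2 v4) (Dsym v1 v4); exact: Q v4 v1 v2 v7.
have q_23_45 : fpc (D v2 v3 + D v4 v5) (D v2 v4 + D v3 v5) (D v3 v4 + D v2 v5).
  by rewrite (Dsym v4 v5) (Dsym v3 v5) (Dsym v2 v5); exact: Q v5 v2 v3 v4.
have q_23_56 : fpc (D v2 v3 + D v5 v6) (D v2 v5 + D v3 v6) (D v3 v5 + D v2 v6).
  by rewrite (Dsym v5 v6) (Dsym v3 v6) (Dsym v2 v6); exact: Q v6 v2 v3 v5.
have q_23_67 : fpc (D v2 v3 + D v6 v7) (D v2 v6 + D v3 v7) (D v3 v6 + D v2 v7).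
  by rewrite (Dsym v6 v7) (Dsym v3 v7) (Dsym v2 v7); exact: Q v7 v2 v3 v6.
have q_23_74 : fpc (D v2 v3 + D v7 v4) (D v2 v7 + D v3 v4) (D v3 v7 + D v2 v4).
  by rewrite (Dsym v7 v4) (Dsym v3 v4) (Dsym v2 v4); exact: Q v4 v2 v3 v7.
have q_30_45 : fpc (D v3 v0 + D v4 v5) (D v3 v4 + D v0 v5) (D v0 v4 + D v3 v5).
  by rewrite (Dsym v4 v5) (Dsym v0 v5) (Dsym v3 v5); exact: Q v5 v3 v0 v4.
have q_30_56 : fpc (D v3 v0 + D v5 v6) (D v3 v5 + D v0 v6) (D v0 v5 + D v3 v6).
  by rewrite (Dsym v5 v6) (Dsym v0 v6) (Dsym v3 v6); exact: Q v6 v3 v0 v5.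
have q_30_67 : fpc (D v3 v0 + D v6 v7) (D v3 v6 + D v0 v7) (D v0 v6 + D v3 v7).
  by rewrite (Dsym v6 v7) (Dsym v0 v7) (Dsym v3 v7); exact: Q v7 v3 v0 v6.
have q_30_74 : fpc (D v3 v0 + D v7 v4) (D v3 v7 + D v0 v4) (D v0 v7 + D v3 v4).
  by rewrite (Dsym v7 v4) (Dsym v0 v4) (Dsym v3 v4); exact: Q v4 v3 v0 v7.
have n01 : D v0 v1 < a \/ b < D v0 v1 := NE v0 v1 erefl erefl.
have n12 : D v1 v2 < a \/ b < D v1 v2 := NE v1 v2 erefl erefl.
have n23 : D v2 v3 < a \/ b < D v2 v3 := NE v2 v3 erefl erefl.
have n30 : D v3 v0 < a \/ b < D v3 v0 := NE v3 v0 erefl erefl.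
have n45 : D v4 v5 < a \/ b < D v4 v5 := NE v4 v5 erefl erefl.
have n56 : D v5 v6 < a \/ b < D v5 v6 := NE v5 v6 erefl erefl.
have n67 : D v6 v7 < a \/ b < D v6 v7 := NE v6 v7 erefl erefl.
have n74 : D v7 v4 < a \/ b < D v7 v4 := NE v7 v4 erefl erefl.
have e02 : a <= D v0 v2 /\ D v0 v2 <= b := EE v0 v2 erefl erefl.
have e13 : a <= D v1 v3 /\ D v1 v3 <= b := EE v1 v3 erefl erefl.
have e46 : a <= D v4 v6 /\ D v4 v6 <= b := EE v4 v6 erefl erefl.
have e57 : a <= D v5 v7 /\ D v5 v7 <= b := EE v5 v7 erefl erefl.
have e04 : a <= D v0 v4 /\ D v0 v4 <= b := EE v0 v4 erefl erefl.
have e05 : a <= D v0 v5 /\ D v0 v5 <= b := EE v0 v5 erefl erefl.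
have e06 : a <= D v0 v6 /\ D v0 v6 <= b := EE v0 v6 erefl erefl.
have e07 : a <= D v0 v7 /\ D v0 v7 <= b := EE v0 v7 erefl erefl.
have e14 : a <= D v1 v4 /\ D v1 v4 <= b := EE v1 v4 erefl erefl.
have e15 : a <= D v1 v5 /\ D v1 v5 <= b := EE v1 v5 erefl erefl.
have e16 : a <= D v1 v6 /\ D v1 v6 <= b := EE v1 v6 erefl erefl.
have e17 : a <= D v1 v7 /\ D v1 v7 <= b := EE v1 v7 erefl erefl.
have e24 : a <= D v2 v4 /\ D v2 v4 <= b := EE v2 v4 erefl erefl.
have e25 : a <= D v2 v5 /\ D v2 v5 <= b := EE v2 v5 erefl erefl.
have e26 : a <= D v2 v6 /\ D v2 v6 <= b := EE v2 v6 erefl erefl.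
have e27 : a <= D v2 v7 /\ D v2 v7 <= b := EE v2 v7 erefl erefl.
have e34 : a <= D v3 v4 /\ D v3 v4 <= b := EE v3 v4 erefl erefl.
have e35 : a <= D v3 v5 /\ D v3 v5 <= b := EE v3 v5 erefl erefl.
have e36 : a <= D v3 v6 /\ D v3 v6 <= b := EE v3 v6 erefl erefl.
have e37 : a <= D v3 v7 /\ D v3 v7 <= b := EE v3 v7 erefl erefl.
(case: n01 => h01; [ (case: n12 => h12; [ (case: n23 => h23; [ (case: n30 => h30; [ (case: n45 => h45; [ (case: n56 => h56; [ (case: n67 => h67; [ (case: n74 => h74; [ (exact: (leafN h01 h23 (proj1 e02) (proj1 e13) h12 h30 q1)) | (exact: (leafN h01 h23 (proj1 e02) (proj1 e13) h12 h30 q1)) ]) | (case: n74 => h74; [ (exact: (leafN h01 h23 (proj1 e02) (proj1 e13) h12 h30 q1)) | (exact: (leafN h01 h23 (proj1 e02) (proj1 e13) h12 h30 q1)) ]) ]) | (case: n67 => h67; [ (case: n74 => h74; [ (exact: (leafN h01 h23 (proj1 e02) (proj1 e13) h12 h30 q1)) | (exact: (leafN h01 h23 (proj1 e02) (proj1 e13) h12 h30 q1)) ]) | (case: n74 => h74; [ (exact: (leafN h01 h23 (proj1 e02) (proj1 e13) h12 h30 q1)) | (exact: (leafN h01 h23 (proj1 e02) (proj1 e13) h12 h30 q1)) ]) ]) ]) | (case: n56 => h56; [ (case: n67 => h67; [ (case: n74 => h74; [ (exact: (leafN h01 h23 (proj1 e02) (proj1 e13) h12 h30 q1)) | (exact: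 (leafN h01 h23 (proj1 e02) (proj1 e13) h12 h30 q1)) ]) | (case: n74 => h74; [ (exact: (leafN h01 h23 (proj1 e02) (proj1 e13) h12 h30 q1)) | (exact: (leafN h01 h23 (proj1 e02) (proj1 e13) h12 h30 q1)) ]) ]) | (case: n67 => h67; [ (case: n74 => h74; [ (exact: (leafN h01 h23 (proj1 e02) (proj1 e13) h12 h30 q1)) | (exact: (leafN h01 h23 (proj1 e02) (proj1 e13) h12 h30 q1)) ]) | (case: n74 => h74; [ (exact: (leafN h01 h23 (proj1 e02) (proj1 e13) h12 h30 q1)) | (exact: (leafN h01 h23 (proj1 e02) (proj1 e13) h12 h30 q1)) ]) ]) ]) ]) | (case: n45 => h45; [ (case: n56 => h56; [ (case: n67 => h67; [ (case: n74 => h74; [ (exact: (leafN h45 h67 (proj1 e46) (proj1 e57) h56 h74 q2)) | (exact: (leafF h30 h74 (proj2 e37) (proj2 e04) (proj2 e07) (proj2 e34) q_30_74)) ]) | (case: n74 => h74; [ (exact: (leafF h30 h67 (proj2 e36) (proj2 e07) (proj2 e06) (proj2 e37) q_30_67)) | (exact: (leafF h30 h67 (proj2 e36) (proj2 e07) (proj2 e06) (proj2 e37) q_30_67)) ]) ]) | (case: n67 => h67; [ (case: n74 => h74; [ (exact: (leafF h30 h56 (proj2 e35) (proj2 e06) (proj2 e05) (proj2 e36) q_30_56)) | (exact: (leafF h30 h56 (proj2 e35) (proj2 e06) (proj2 e05) (proj2 e36) q_30_56)) ]) | (case: n74 => h74; [ (exact: (leafF h30 h56 (proj2 e35) (proj2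 e06) (proj2 e05) (proj2 e36) q_30_56)) | (exact: (leafF h30 h56 (proj2 e35) (proj2 e06) (proj2 e05) (proj2 e36) q_30_56)) ]) ]) ]) | (case: n56 => h56; [ (case: n67 => h67; [ (case: n74 => h74; [ (exact: (leafF h30 h45 (proj2 e34) (proj2 e05) (proj2 e04) (proj2 e35) q_30_45)) | (exact: (leafF h30 h45 (proj2 e34) (proj2 e05) (proj2 e04) (proj2 e35) q_30_45)) ]) | (case: n74 => h74; [ (exact: (leafF h30 h45 (proj2 e34) (proj2 e05) (proj2 e04) (proj2 e35) q_30_45)) | (exact: (leafF h30 h45 (proj2 e34) (proj2 e05) (proj2 e04) (proj2 e35) q_30_45)) ]) ]) | (case: n67 => h67; [ (case: n74 => h74; [ (exact: (leafF h30 h45 (proj2 e34) (proj2 e05) (proj2 e04) (proj2 e35) q_30_45)) | (exact: (leafF h30 h45 (proj2 e34) (proj2 e05) (proj2 e04) (proj2 e35) q_30_45)) ]) | (case: n74 => h74; [ (exact: (leafF h30 h45 (proj2 e34) (proj2 e05) (proj2 e04) (proj2 e35) q_30_45)) | (exact: (leafF h30 h45 (proj2 e34) (proj2 e05) (proj2 e04) (proj2 e35) q_30_45)) ]) ]) ]) ]) ]) | (case: n30 => h30; [ (case: n45 => h45; [ (case: n56 => h56; [ (case: n67 => h67; [ (case: n74 => h74; [ (exact: (leafN h45 h67 (proj1 e46) (proj1 e57) h56 h74 q2)) | (exact: (leafF h23 h74 (proj2 e27) (proj2 e34) (proj2 e37) (proj2 e24) q_23_74)) ]) | (case: n74 =>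 h74; [ (exact: (leafF h23 h67 (proj2 e26) (proj2 e37) (proj2 e36) (proj2 e27) q_23_67)) | (exact: (leafF h23 h67 (proj2 e26) (proj2 e37) (proj2 e36) (proj2 e27) q_23_67)) ]) ]) | (case: n67 => h67; [ (case: n74 => h74; [ (exact: (leafF h23 h56 (proj2 e25) (proj2 e36) (proj2 e35) (proj2 e26) q_23_56)) | (exact: (leafF h23 h56 (proj2 e25) (proj2 e36) (proj2 e35) (proj2 e26) q_23_56)) ]) | (case: n74 => h74; [ (exact: (leafF h23 h56 (proj2 e25) (proj2 e36) (proj2 e35) (proj2 e26) q_23_56)) | (exact: (leafF h23 h56 (proj2 e25) (proj2 e36) (proj2 e35) (proj2 e26) q_23_56)) ]) ]) ]) | (case: n56 => h56; [ (case: n67 => h67; [ (case: n74 => h74; [ (exact: (leafF h23 h45 (proj2 e24) (proj2 e35) (proj2 e34) (proj2 e25) q_23_45)) | (exact: (leafF h23 h45 (proj2 e24) (proj2 e35) (proj2 e34) (proj2 e25) q_23_45)) ]) | (case: n74 => h74; [ (exact: (leafF h23 h45 (proj2 e24) (proj2 e35) (proj2 e34) (proj2 e25) q_23_45)) | (exact: (leafF h23 h45 (proj2 e24) (proj2 e35) (proj2 e34) (proj2 e25) q_23_45)) ]) ]) | (case: n67 => h67; [ (case: n74 => h74; [ (exact: (leafF h23 h45 (proj2 e24) (proj2 e35) (proj2 e34) (proj2 e25) q_23_45)) | (exact: (leafF h23 h45 (proj2 e24) (proj2 e35) (proj2 e34) (proj2 e25) q_23_45)) ]) | (case: n74 =>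 h74; [ (exact: (leafF h23 h45 (proj2 e24) (proj2 e35) (proj2 e34) (proj2 e25) q_23_45)) | (exact: (leafF h23 h45 (proj2 e24) (proj2 e35) (proj2 e34) (proj2 e25) q_23_45)) ]) ]) ]) ]) | (case: n45 => h45; [ (case: n56 => h56; [ (case: n67 => h67; [ (case: n74 => h74; [ (exact: (leafN h45 h67 (proj1 e46) (proj1 e57) h56 h74 q2)) | (exact: (leafF h23 h74 (proj2 e27) (proj2 e34) (proj2 e37) (proj2 e24) q_23_74)) ]) | (case: n74 => h74; [ (exact: (leafF h23 h67 (proj2 e26) (proj2 e37) (proj2 e36) (proj2 e27) q_23_67)) | (exact: (leafF h23 h67 (proj2 e26) (proj2 e37) (proj2 e36) (proj2 e27) q_23_67)) ]) ]) | (case: n67 => h67; [ (case: n74 => h74; [ (exact: (leafF h23 h56 (proj2 e25) (proj2 e36) (proj2 e35) (proj2 e26) q_23_56)) | (exact: (leafF h23 h56 (proj2 e25) (proj2 e36) (proj2 e35) (proj2 e26) q_23_56)) ]) | (case: n74 => h74; [ (exact: (leafF h23 h56 (proj2 e25) (proj2 e36) (proj2 e35) (proj2 e26) q_23_56)) | (exact: (leafF h23 h56 (proj2 e25) (proj2 e36) (proj2 e35) (proj2 e26) q_23_56)) ]) ]) ]) | (case: n56 => h56; [ (case: n67 => h67; [ (case: n74 => h74; [ (exact: (leafF h23 h45 (proj2 e24) (proj2 e35) (proj2 e34) (proj2 e25) q_23_45)) | (exact: (leafF h23 h45 (proj2 e24) (proj2 e35) (proj2 e34) (proj2 e25) q_23_45))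 ]) | (case: n74 => h74; [ (exact: (leafF h23 h45 (proj2 e24) (proj2 e35) (proj2 e34) (proj2 e25) q_23_45)) | (exact: (leafF h23 h45 (proj2 e24) (proj2 e35) (proj2 e34) (proj2 e25) q_23_45)) ]) ]) | (case: n67 => h67; [ (case: n74 => h74; [ (exact: (leafF h23 h45 (proj2 e24) (proj2 e35) (proj2 e34) (proj2 e25) q_23_45)) | (exact: (leafF h23 h45 (proj2 e24) (proj2 e35) (proj2 e34) (proj2 e25) q_23_45)) ]) | (case: n74 => h74; [ (exact: (leafF h23 h45 (proj2 e24) (proj2 e35) (proj2 e34) (proj2 e25) q_23_45)) | (exact: (leafF h23 h45 (proj2 e24) (proj2 e35) (proj2 e34) (proj2 e25) q_23_45)) ]) ]) ]) ]) ]) ]) | (case: n23 => h23; [ (case: n30 => h30; [ (case: n45 => h45; [ (case: n56 => h56; [ (case: n67 => h67; [ (case: n74 => h74; [ (exact: (leafN h45 h67 (proj1 e46) (proj1 e57) h56 h74 q2)) | (exact: (leafF h12 h74 (proj2 e17) (proj2 e24) (proj2 e27) (proj2 e14) q_12_74)) ]) | (case: n74 => h74; [ (exact: (leafF h12 h67 (proj2 e16) (proj2 e27) (proj2 e26) (proj2 e17) q_12_67)) | (exact: (leafF h12 h67 (proj2 e16) (proj2 e27) (proj2 e26) (proj2 e17) q_12_67)) ]) ]) | (case: n67 => h67; [ (case: n74 => h74; [ (exact: (leafF h12 h56 (proj2 e15) (proj2 e26) (proj2 e25) (proj2 e16) q_12_56)) | (exact: (leafF h12 h56 (proj2 e15)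 (proj2 e26) (proj2 e25) (proj2 e16) q_12_56)) ]) | (case: n74 => h74; [ (exact: (leafF h12 h56 (proj2 e15) (proj2 e26) (proj2 e25) (proj2 e16) q_12_56)) | (exact: (leafF h12 h56 (proj2 e15) (proj2 e26) (proj2 e25) (proj2 e16) q_12_56)) ]) ]) ]) | (case: n56 => h56; [ (case: n67 => h67; [ (case: n74 => h74; [ (exact: (leafF h12 h45 (proj2 e14) (proj2 e25) (proj2 e24) (proj2 e15) q_12_45)) | (exact: (leafF h12 h45 (proj2 e14) (proj2 e25) (proj2 e24) (proj2 e15) q_12_45)) ]) | (case: n74 => h74; [ (exact: (leafF h12 h45 (proj2 e14) (proj2 e25) (proj2 e24) (proj2 e15) q_12_45)) | (exact: (leafF h12 h45 (proj2 e14) (proj2 e25) (proj2 e24) (proj2 e15) q_12_45)) ]) ]) | (case: n67 => h67; [ (case: n74 => h74; [ (exact: (leafF h12 h45 (proj2 e14) (proj2 e25) (proj2 e24) (proj2 e15) q_12_45)) | (exact: (leafF h12 h45 (proj2 e14) (proj2 e25) (proj2 e24) (proj2 e15) q_12_45)) ]) | (case: n74 => h74; [ (exact: (leafF h12 h45 (proj2 e14) (proj2 e25) (proj2 e24) (proj2 e15) q_12_45)) | (exact: (leafF h12 h45 (proj2 e14) (proj2 e25) (proj2 e24) (proj2 e15) q_12_45)) ]) ]) ]) ]) | (case: n45 => h45; [ (case: n56 => h56; [ (case: n67 => h67; [ (case: n74 => h74; [ (exact: (leafN h45 h67 (proj1 e46) (proj1 e57) h56 h74 q2)) | (exact: (leafF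 h12 h74 (proj2 e17) (proj2 e24) (proj2 e27) (proj2 e14) q_12_74)) ]) | (case: n74 => h74; [ (exact: (leafF h12 h67 (proj2 e16) (proj2 e27) (proj2 e26) (proj2 e17) q_12_67)) | (exact: (leafF h12 h67 (proj2 e16) (proj2 e27) (proj2 e26) (proj2 e17) q_12_67)) ]) ]) | (case: n67 => h67; [ (case: n74 => h74; [ (exact: (leafF h12 h56 (proj2 e15) (proj2 e26) (proj2 e25) (proj2 e16) q_12_56)) | (exact: (leafF h12 h56 (proj2 e15) (proj2 e26) (proj2 e25) (proj2 e16) q_12_56)) ]) | (case: n74 => h74; [ (exact: (leafF h12 h56 (proj2 e15) (proj2 e26) (proj2 e25) (proj2 e16) q_12_56)) | (exact: (leafF h12 h56 (proj2 e15) (proj2 e26) (proj2 e25) (proj2 e16) q_12_56)) ]) ]) ]) | (case: n56 => h56; [ (case: n67 => h67; [ (case: n74 => h74; [ (exact: (leafF h12 h45 (proj2 e14) (proj2 e25) (proj2 e24) (proj2 e15) q_12_45)) | (exact: (leafF h12 h45 (proj2 e14) (proj2 e25) (proj2 e24) (proj2 e15) q_12_45)) ]) | (case: n74 => h74; [ (exact: (leafF h12 h45 (proj2 e14) (proj2 e25) (proj2 e24) (proj2 e15) q_12_45)) | (exact: (leafF h12 h45 (proj2 e14) (proj2 e25) (proj2 e24) (proj2 e15) q_12_45)) ]) ]) | (case: n67 => h67; [ (case: n74 => h74; [ (exact: (leafF h12 h45 (proj2 e14) (proj2 e25) (proj2 e24) (proj2 e15) q_12_45)) | (exact: (leafF h12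 h45 (proj2 e14) (proj2 e25) (proj2 e24) (proj2 e15) q_12_45)) ]) | (case: n74 => h74; [ (exact: (leafF h12 h45 (proj2 e14) (proj2 e25) (proj2 e24) (proj2 e15) q_12_45)) | (exact: (leafF h12 h45 (proj2 e14) (proj2 e25) (proj2 e24) (proj2 e15) q_12_45)) ]) ]) ]) ]) ]) | (case: n30 => h30; [ (case: n45 => h45; [ (case: n56 => h56; [ (case: n67 => h67; [ (case: n74 => h74; [ (exact: (leafN h45 h67 (proj1 e46) (proj1 e57) h56 h74 q2)) | (exact: (leafF h12 h74 (proj2 e17) (proj2 e24) (proj2 e27) (proj2 e14) q_12_74)) ]) | (case: n74 => h74; [ (exact: (leafF h12 h67 (proj2 e16) (proj2 e27) (proj2 e26) (proj2 e17) q_12_67)) | (exact: (leafF h12 h67 (proj2 e16) (proj2 e27) (proj2 e26) (proj2 e17) q_12_67)) ]) ]) | (case: n67 => h67; [ (case: n74 => h74; [ (exact: (leafF h12 h56 (proj2 e15) (proj2 e26) (proj2 e25) (proj2 e16) q_12_56)) | (exact: (leafF h12 h56 (proj2 e15) (proj2 e26) (proj2 e25) (proj2 e16) q_12_56)) ]) | (case: n74 => h74; [ (exact: (leafF h12 h56 (proj2 e15) (proj2 e26) (proj2 e25) (proj2 e16) q_12_56)) | (exact: (leafF h12 h56 (proj2 e15) (proj2 e26) (proj2 e25) (proj2 e16) q_12_56)) ]) ]) ]) | (case: n56 => h56; [ (case: n67 => h67; [ (case: n74 => h74; [ (exact: (leafF h12 h45 (proj2 e14) (proj2 e25) (proj2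 e24) (proj2 e15) q_12_45)) | (exact: (leafF h12 h45 (proj2 e14) (proj2 e25) (proj2 e24) (proj2 e15) q_12_45)) ]) | (case: n74 => h74; [ (exact: (leafF h12 h45 (proj2 e14) (proj2 e25) (proj2 e24) (proj2 e15) q_12_45)) | (exact: (leafF h12 h45 (proj2 e14) (proj2 e25) (proj2 e24) (proj2 e15) q_12_45)) ]) ]) | (case: n67 => h67; [ (case: n74 => h74; [ (exact: (leafF h12 h45 (proj2 e14) (proj2 e25) (proj2 e24) (proj2 e15) q_12_45)) | (exact: (leafF h12 h45 (proj2 e14) (proj2 e25) (proj2 e24) (proj2 e15) q_12_45)) ]) | (case: n74 => h74; [ (exact: (leafF h12 h45 (proj2 e14) (proj2 e25) (proj2 e24) (proj2 e15) q_12_45)) | (exact: (leafF h12 h45 (proj2 e14) (proj2 e25) (proj2 e24) (proj2 e15) q_12_45)) ]) ]) ]) ]) | (case: n45 => h45; [ (case: n56 => h56; [ (case: n67 => h67; [ (case: n74 => h74; [ (exact: (leafN h45 h67 (proj1 e46) (proj1 e57) h56 h74 q2)) | (exact: (leafF h12 h74 (proj2 e17) (proj2 e24) (proj2 e27) (proj2 e14) q_12_74)) ]) | (case: n74 => h74; [ (exact: (leafF h12 h67 (proj2 e16) (proj2 e27) (proj2 e26) (proj2 e17) q_12_67)) | (exact: (leafF h12 h67 (proj2 e16) (proj2 e27) (proj2 e26) (proj2 e17) q_12_67)) ]) ]) | (case: n67 => h67; [ (case: n74 => h74; [ (exact: (leafF h12 h56 (proj2 e15) (proj2 e26) (proj2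 e25) (proj2 e16) q_12_56)) | (exact: (leafF h12 h56 (proj2 e15) (proj2 e26) (proj2 e25) (proj2 e16) q_12_56)) ]) | (case: n74 => h74; [ (exact: (leafF h12 h56 (proj2 e15) (proj2 e26) (proj2 e25) (proj2 e16) q_12_56)) | (exact: (leafF h12 h56 (proj2 e15) (proj2 e26) (proj2 e25) (proj2 e16) q_12_56)) ]) ]) ]) | (case: n56 => h56; [ (case: n67 => h67; [ (case: n74 => h74; [ (exact: (leafF h12 h45 (proj2 e14) (proj2 e25) (proj2 e24) (proj2 e15) q_12_45)) | (exact: (leafF h12 h45 (proj2 e14) (proj2 e25) (proj2 e24) (proj2 e15) q_12_45)) ]) | (case: n74 => h74; [ (exact: (leafF h12 h45 (proj2 e14) (proj2 e25) (proj2 e24) (proj2 e15) q_12_45)) | (exact: (leafF h12 h45 (proj2 e14) (proj2 e25) (proj2 e24) (proj2 e15) q_12_45)) ]) ]) | (case: n67 => h67; [ (case: n74 => h74; [ (exact: (leafF h12 h45 (proj2 e14) (proj2 e25) (proj2 e24) (proj2 e15) q_12_45)) | (exact: (leafF h12 h45 (proj2 e14) (proj2 e25) (proj2 e24) (proj2 e15) q_12_45)) ]) | (case: n74 => h74; [ (exact: (leafF h12 h45 (proj2 e14) (proj2 e25) (proj2 e24) (proj2 e15) q_12_45)) | (exact: (leafF h12 h45 (proj2 e14) (proj2 e25) (proj2 e24) (proj2 e15) q_12_45)) ]) ]) ]) ]) ]) ]) ]) | (case: n12 => h12; [ (case: n23 => h23; [ (case: n30 => h30; [ (case: n45 => h45;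 [ (case: n56 => h56; [ (case: n67 => h67; [ (case: n74 => h74; [ (exact: (leafN h45 h67 (proj1 e46) (proj1 e57) h56 h74 q2)) | (exact: (leafF h01 h74 (proj2 e07) (proj2 e14) (proj2 e17) (proj2 e04) q_01_74)) ]) | (case: n74 => h74; [ (exact: (leafF h01 h67 (proj2 e06) (proj2 e17) (proj2 e16) (proj2 e07) q_01_67)) | (exact: (leafF h01 h67 (proj2 e06) (proj2 e17) (proj2 e16) (proj2 e07) q_01_67)) ]) ]) | (case: n67 => h67; [ (case: n74 => h74; [ (exact: (leafF h01 h56 (proj2 e05) (proj2 e16) (proj2 e15) (proj2 e06) q_01_56)) | (exact: (leafF h01 h56 (proj2 e05) (proj2 e16) (proj2 e15) (proj2 e06) q_01_56)) ]) | (case: n74 => h74; [ (exact: (leafF h01 h56 (proj2 e05) (proj2 e16) (proj2 e15) (proj2 e06) q_01_56)) | (exact: (leafF h01 h56 (proj2 e05) (proj2 e16) (proj2 e15) (proj2 e06) q_01_56)) ]) ]) ]) | (case: n56 => h56; [ (case: n67 => h67; [ (case: n74 => h74; [ (exact: (leafF h01 h45 (proj2 e04) (proj2 e15) (proj2 e14) (proj2 e05) q_01_45)) | (exact: (leafF h01 h45 (proj2 e04) (proj2 e15) (proj2 e14) (proj2 e05) q_01_45)) ]) | (case: n74 => h74; [ (exact: (leafF h01 h45 (proj2 e04) (proj2 e15) (proj2 e14) (proj2 e05) q_01_45)) | (exact: (leafF h01 h45 (proj2 e04) (proj2 e15) (proj2 e14) (proj2 e05) q_01_45)) ]) ]) |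 (case: n67 => h67; [ (case: n74 => h74; [ (exact: (leafF h01 h45 (proj2 e04) (proj2 e15) (proj2 e14) (proj2 e05) q_01_45)) | (exact: (leafF h01 h45 (proj2 e04) (proj2 e15) (proj2 e14) (proj2 e05) q_01_45)) ]) | (case: n74 => h74; [ (exact: (leafF h01 h45 (proj2 e04) (proj2 e15) (proj2 e14) (proj2 e05) q_01_45)) | (exact: (leafF h01 h45 (proj2 e04) (proj2 e15) (proj2 e14) (proj2 e05) q_01_45)) ]) ]) ]) ]) | (case: n45 => h45; [ (case: n56 => h56; [ (case: n67 => h67; [ (case: n74 => h74; [ (exact: (leafN h45 h67 (proj1 e46) (proj1 e57) h56 h74 q2)) | (exact: (leafF h01 h74 (proj2 e07) (proj2 e14) (proj2 e17) (proj2 e04) q_01_74)) ]) | (case: n74 => h74; [ (exact: (leafF h01 h67 (proj2 e06) (proj2 e17) (proj2 e16) (proj2 e07) q_01_67)) | (exact: (leafF h01 h67 (proj2 e06) (proj2 e17) (proj2 e16) (proj2 e07) q_01_67)) ]) ]) | (case: n67 => h67; [ (case: n74 => h74; [ (exact: (leafF h01 h56 (proj2 e05) (proj2 e16) (proj2 e15) (proj2 e06) q_01_56)) | (exact: (leafF h01 h56 (proj2 e05) (proj2 e16) (proj2 e15) (proj2 e06) q_01_56)) ]) | (case: n74 => h74; [ (exact: (leafF h01 h56 (proj2 e05) (proj2 e16) (proj2 e15) (proj2 e06) q_01_56)) | (exact: (leafF h01 h56 (proj2 e05) (proj2 e16) (proj2 e15) (proj2 e06) q_01_56)) ]) ]) ])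 | (case: n56 => h56; [ (case: n67 => h67; [ (case: n74 => h74; [ (exact: (leafF h01 h45 (proj2 e04) (proj2 e15) (proj2 e14) (proj2 e05) q_01_45)) | (exact: (leafF h01 h45 (proj2 e04) (proj2 e15) (proj2 e14) (proj2 e05) q_01_45)) ]) | (case: n74 => h74; [ (exact: (leafF h01 h45 (proj2 e04) (proj2 e15) (proj2 e14) (proj2 e05) q_01_45)) | (exact: (leafF h01 h45 (proj2 e04) (proj2 e15) (proj2 e14) (proj2 e05) q_01_45)) ]) ]) | (case: n67 => h67; [ (case: n74 => h74; [ (exact: (leafF h01 h45 (proj2 e04) (proj2 e15) (proj2 e14) (proj2 e05) q_01_45)) | (exact: (leafF h01 h45 (proj2 e04) (proj2 e15) (proj2 e14) (proj2 e05) q_01_45)) ]) | (case: n74 => h74; [ (exact: (leafF h01 h45 (proj2 e04) (proj2 e15) (proj2 e14) (proj2 e05) q_01_45)) | (exact: (leafF h01 h45 (proj2 e04) (proj2 e15) (proj2 e14) (proj2 e05) q_01_45)) ]) ]) ]) ]) ]) | (case: n30 => h30; [ (case: n45 => h45; [ (case: n56 => h56; [ (case: n67 => h67; [ (case: n74 => h74; [ (exact: (leafN h45 h67 (proj1 e46) (proj1 e57) h56 h74 q2)) | (exact: (leafF h01 h74 (proj2 e07) (proj2 e14) (proj2 e17) (proj2 e04) q_01_74)) ]) | (case: n74 => h74; [ (exact: (leafF h01 h67 (proj2 e06) (proj2 e17) (proj2 e16) (proj2 e07) q_01_67)) | (exact: (leafF h01 h67 (proj2 e06) (proj2 e17) (proj2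 e16) (proj2 e07) q_01_67)) ]) ]) | (case: n67 => h67; [ (case: n74 => h74; [ (exact: (leafF h01 h56 (proj2 e05) (proj2 e16) (proj2 e15) (proj2 e06) q_01_56)) | (exact: (leafF h01 h56 (proj2 e05) (proj2 e16) (proj2 e15) (proj2 e06) q_01_56)) ]) | (case: n74 => h74; [ (exact: (leafF h01 h56 (proj2 e05) (proj2 e16) (proj2 e15) (proj2 e06) q_01_56)) | (exact: (leafF h01 h56 (proj2 e05) (proj2 e16) (proj2 e15) (proj2 e06) q_01_56)) ]) ]) ]) | (case: n56 => h56; [ (case: n67 => h67; [ (case: n74 => h74; [ (exact: (leafF h01 h45 (proj2 e04) (proj2 e15) (proj2 e14) (proj2 e05) q_01_45)) | (exact: (leafF h01 h45 (proj2 e04) (proj2 e15) (proj2 e14) (proj2 e05) q_01_45)) ]) | (case: n74 => h74; [ (exact: (leafF h01 h45 (proj2 e04) (proj2 e15) (proj2 e14) (proj2 e05) q_01_45)) | (exact: (leafF h01 h45 (proj2 e04) (proj2 e15) (proj2 e14) (proj2 e05) q_01_45)) ]) ]) | (case: n67 => h67; [ (case: n74 => h74; [ (exact: (leafF h01 h45 (proj2 e04) (proj2 e15) (proj2 e14) (proj2 e05) q_01_45)) | (exact: (leafF h01 h45 (proj2 e04) (proj2 e15) (proj2 e14) (proj2 e05) q_01_45)) ]) | (case: n74 => h74; [ (exact: (leafF h01 h45 (proj2 e04) (proj2 e15) (proj2 e14) (proj2 e05) q_01_45)) | (exact: (leafF h01 h45 (proj2 e04) (proj2 e15) (proj2 e14)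 (proj2 e05) q_01_45)) ]) ]) ]) ]) | (case: n45 => h45; [ (case: n56 => h56; [ (case: n67 => h67; [ (case: n74 => h74; [ (exact: (leafN h45 h67 (proj1 e46) (proj1 e57) h56 h74 q2)) | (exact: (leafF h01 h74 (proj2 e07) (proj2 e14) (proj2 e17) (proj2 e04) q_01_74)) ]) | (case: n74 => h74; [ (exact: (leafF h01 h67 (proj2 e06) (proj2 e17) (proj2 e16) (proj2 e07) q_01_67)) | (exact: (leafF h01 h67 (proj2 e06) (proj2 e17) (proj2 e16) (proj2 e07) q_01_67)) ]) ]) | (case: n67 => h67; [ (case: n74 => h74; [ (exact: (leafF h01 h56 (proj2 e05) (proj2 e16) (proj2 e15) (proj2 e06) q_01_56)) | (exact: (leafF h01 h56 (proj2 e05) (proj2 e16) (proj2 e15) (proj2 e06) q_01_56)) ]) | (case: n74 => h74; [ (exact: (leafF h01 h56 (proj2 e05) (proj2 e16) (proj2 e15) (proj2 e06) q_01_56)) | (exact: (leafF h01 h56 (proj2 e05) (proj2 e16) (proj2 e15) (proj2 e06) q_01_56)) ]) ]) ]) | (case: n56 => h56; [ (case: n67 => h67; [ (case: n74 => h74; [ (exact: (leafF h01 h45 (proj2 e04) (proj2 e15) (proj2 e14) (proj2 e05) q_01_45)) | (exact: (leafF h01 h45 (proj2 e04) (proj2 e15) (proj2 e14) (proj2 e05) q_01_45)) ]) | (case: n74 => h74; [ (exact: (leafF h01 h45 (proj2 e04) (proj2 e15) (proj2 e14) (proj2 e05) q_01_45)) | (exact: (leafF h01 h45 (proj2 e04)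 (proj2 e15) (proj2 e14) (proj2 e05) q_01_45)) ]) ]) | (case: n67 => h67; [ (case: n74 => h74; [ (exact: (leafF h01 h45 (proj2 e04) (proj2 e15) (proj2 e14) (proj2 e05) q_01_45)) | (exact: (leafF h01 h45 (proj2 e04) (proj2 e15) (proj2 e14) (proj2 e05) q_01_45)) ]) | (case: n74 => h74; [ (exact: (leafF h01 h45 (proj2 e04) (proj2 e15) (proj2 e14) (proj2 e05) q_01_45)) | (exact: (leafF h01 h45 (proj2 e04) (proj2 e15) (proj2 e14) (proj2 e05) q_01_45)) ]) ]) ]) ]) ]) ]) | (case: n23 => h23; [ (case: n30 => h30; [ (case: n45 => h45; [ (case: n56 => h56; [ (case: n67 => h67; [ (case: n74 => h74; [ (exact: (leafN h45 h67 (proj1 e46) (proj1 e57) h56 h74 q2)) | (exact: (leafF h01 h74 (proj2 e07) (proj2 e14) (proj2 e17) (proj2 e04) q_01_74)) ]) | (case: n74 => h74; [ (exact: (leafF h01 h67 (proj2 e06) (proj2 e17) (proj2 e16) (proj2 e07) q_01_67)) | (exact: (leafF h01 h67 (proj2 e06) (proj2 e17) (proj2 e16) (proj2 e07) q_01_67)) ]) ]) | (case: n67 => h67; [ (case: n74 => h74; [ (exact: (leafF h01 h56 (proj2 e05) (proj2 e16) (proj2 e15) (proj2 e06) q_01_56)) | (exact: (leafF h01 h56 (proj2 e05) (proj2 e16) (proj2 e15) (proj2 e06) q_01_56)) ]) | (case: n74 => h74; [ (exact: (leafF h01 h56 (proj2 e05) (proj2 e16) (proj2 e15) (proj2 e06)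 q_01_56)) | (exact: (leafF h01 h56 (proj2 e05) (proj2 e16) (proj2 e15) (proj2 e06) q_01_56)) ]) ]) ]) | (case: n56 => h56; [ (case: n67 => h67; [ (case: n74 => h74; [ (exact: (leafF h01 h45 (proj2 e04) (proj2 e15) (proj2 e14) (proj2 e05) q_01_45)) | (exact: (leafF h01 h45 (proj2 e04) (proj2 e15) (proj2 e14) (proj2 e05) q_01_45)) ]) | (case: n74 => h74; [ (exact: (leafF h01 h45 (proj2 e04) (proj2 e15) (proj2 e14) (proj2 e05) q_01_45)) | (exact: (leafF h01 h45 (proj2 e04) (proj2 e15) (proj2 e14) (proj2 e05) q_01_45)) ]) ]) | (case: n67 => h67; [ (case: n74 => h74; [ (exact: (leafF h01 h45 (proj2 e04) (proj2 e15) (proj2 e14) (proj2 e05) q_01_45)) | (exact: (leafF h01 h45 (proj2 e04) (proj2 e15) (proj2 e14) (proj2 e05) q_01_45)) ]) | (case: n74 => h74; [ (exact: (leafF h01 h45 (proj2 e04) (proj2 e15) (proj2 e14) (proj2 e05) q_01_45)) | (exact: (leafF h01 h45 (proj2 e04) (proj2 e15) (proj2 e14) (proj2 e05) q_01_45)) ]) ]) ]) ]) | (case: n45 => h45; [ (case: n56 => h56; [ (case: n67 => h67; [ (case: n74 => h74; [ (exact: (leafN h45 h67 (proj1 e46) (proj1 e57) h56 h74 q2)) | (exact: (leafF h01 h74 (proj2 e07) (proj2 e14) (proj2 e17) (proj2 e04) q_01_74)) ]) | (case: n74 => h74; [ (exact: (leafF h01 h67 (proj2 e06) (proj2 e17)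 (proj2 e16) (proj2 e07) q_01_67)) | (exact: (leafF h01 h67 (proj2 e06) (proj2 e17) (proj2 e16) (proj2 e07) q_01_67)) ]) ]) | (case: n67 => h67; [ (case: n74 => h74; [ (exact: (leafF h01 h56 (proj2 e05) (proj2 e16) (proj2 e15) (proj2 e06) q_01_56)) | (exact: (leafF h01 h56 (proj2 e05) (proj2 e16) (proj2 e15) (proj2 e06) q_01_56)) ]) | (case: n74 => h74; [ (exact: (leafF h01 h56 (proj2 e05) (proj2 e16) (proj2 e15) (proj2 e06) q_01_56)) | (exact: (leafF h01 h56 (proj2 e05) (proj2 e16) (proj2 e15) (proj2 e06) q_01_56)) ]) ]) ]) | (case: n56 => h56; [ (case: n67 => h67; [ (case: n74 => h74; [ (exact: (leafF h01 h45 (proj2 e04) (proj2 e15) (proj2 e14) (proj2 e05) q_01_45)) | (exact: (leafF h01 h45 (proj2 e04) (proj2 e15) (proj2 e14) (proj2 e05) q_01_45)) ]) | (case: n74 => h74; [ (exact: (leafF h01 h45 (proj2 e04) (proj2 e15) (proj2 e14) (proj2 e05) q_01_45)) | (exact: (leafF h01 h45 (proj2 e04) (proj2 e15) (proj2 e14) (proj2 e05) q_01_45)) ]) ]) | (case: n67 => h67; [ (case: n74 => h74; [ (exact: (leafF h01 h45 (proj2 e04) (proj2 e15) (proj2 e14) (proj2 e05) q_01_45)) | (exact: (leafF h01 h45 (proj2 e04) (proj2 e15) (proj2 e14) (proj2 e05) q_01_45)) ]) | (case: n74 => h74; [ (exact: (leafF h01 h45 (proj2 e04) (proj2 e15) (proj2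 e14) (proj2 e05) q_01_45)) | (exact: (leafF h01 h45 (proj2 e04) (proj2 e15) (proj2 e14) (proj2 e05) q_01_45)) ]) ]) ]) ]) ]) | (case: n30 => h30; [ (case: n45 => h45; [ (case: n56 => h56; [ (case: n67 => h67; [ (case: n74 => h74; [ (exact: (leafN h45 h67 (proj1 e46) (proj1 e57) h56 h74 q2)) | (exact: (leafF h01 h74 (proj2 e07) (proj2 e14) (proj2 e17) (proj2 e04) q_01_74)) ]) | (case: n74 => h74; [ (exact: (leafF h01 h67 (proj2 e06) (proj2 e17) (proj2 e16) (proj2 e07) q_01_67)) | (exact: (leafF h01 h67 (proj2 e06) (proj2 e17) (proj2 e16) (proj2 e07) q_01_67)) ]) ]) | (case: n67 => h67; [ (case: n74 => h74; [ (exact: (leafF h01 h56 (proj2 e05) (proj2 e16) (proj2 e15) (proj2 e06) q_01_56)) | (exact: (leafF h01 h56 (proj2 e05) (proj2 e16) (proj2 e15) (proj2 e06) q_01_56)) ]) | (case: n74 => h74; [ (exact: (leafF h01 h56 (proj2 e05) (proj2 e16) (proj2 e15) (proj2 e06) q_01_56)) | (exact: (leafF h01 h56 (proj2 e05) (proj2 e16) (proj2 e15) (proj2 e06) q_01_56)) ]) ]) ]) | (case: n56 => h56; [ (case: n67 => h67; [ (case: n74 => h74; [ (exact: (leafF h01 h45 (proj2 e04) (proj2 e15) (proj2 e14) (proj2 e05) q_01_45)) | (exact: (leafF h01 h45 (proj2 e04) (proj2 e15) (proj2 e14) (proj2 e05) q_01_45)) ]) | (case: n74 => h74; [ (exact: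 (leafF h01 h45 (proj2 e04) (proj2 e15) (proj2 e14) (proj2 e05) q_01_45)) | (exact: (leafF h01 h45 (proj2 e04) (proj2 e15) (proj2 e14) (proj2 e05) q_01_45)) ]) ]) | (case: n67 => h67; [ (case: n74 => h74; [ (exact: (leafF h01 h45 (proj2 e04) (proj2 e15) (proj2 e14) (proj2 e05) q_01_45)) | (exact: (leafF h01 h45 (proj2 e04) (proj2 e15) (proj2 e14) (proj2 e05) q_01_45)) ]) | (case: n74 => h74; [ (exact: (leafF h01 h45 (proj2 e04) (proj2 e15) (proj2 e14) (proj2 e05) q_01_45)) | (exact: (leafF h01 h45 (proj2 e04) (proj2 e15) (proj2 e14) (proj2 e05) q_01_45)) ]) ]) ]) ]) | (case: n45 => h45; [ (case: n56 => h56; [ (case: n67 => h67; [ (case: n74 => h74; [ (exact: (leafN h45 h67 (proj1 e46) (proj1 e57) h56 h74 q2)) | (exact: (leafF h01 h74 (proj2 e07) (proj2 e14) (proj2 e17) (proj2 e04) q_01_74)) ]) | (case: n74 => h74; [ (exact: (leafF h01 h67 (proj2 e06) (proj2 e17) (proj2 e16) (proj2 e07) q_01_67)) | (exact: (leafF h01 h67 (proj2 e06) (proj2 e17) (proj2 e16) (proj2 e07) q_01_67)) ]) ]) | (case: n67 => h67; [ (case: n74 => h74; [ (exact: (leafF h01 h56 (proj2 e05) (proj2 e16) (proj2 e15) (proj2 e06) q_01_56)) | (exact: (leafF h01 h56 (proj2 e05) (proj2 e16) (proj2 e15) (proj2 e06) q_01_56)) ]) | (case: n74 => h74; [ (exact: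 (leafF h01 h56 (proj2 e05) (proj2 e16) (proj2 e15) (proj2 e06) q_01_56)) | (exact: (leafF h01 h56 (proj2 e05) (proj2 e16) (proj2 e15) (proj2 e06) q_01_56)) ]) ]) ]) | (case: n56 => h56; [ (case: n67 => h67; [ (case: n74 => h74; [ (exact: (leafF h01 h45 (proj2 e04) (proj2 e15) (proj2 e14) (proj2 e05) q_01_45)) | (exact: (leafF h01 h45 (proj2 e04) (proj2 e15) (proj2 e14) (proj2 e05) q_01_45)) ]) | (case: n74 => h74; [ (exact: (leafF h01 h45 (proj2 e04) (proj2 e15) (proj2 e14) (proj2 e05) q_01_45)) | (exact: (leafF h01 h45 (proj2 e04) (proj2 e15) (proj2 e14) (proj2 e05) q_01_45)) ]) ]) | (case: n67 => h67; [ (case: n74 => h74; [ (exact: (leafF h01 h45 (proj2 e04) (proj2 e15) (proj2 e14) (proj2 e05) q_01_45)) | (exact: (leafF h01 h45 (proj2 e04) (proj2 e15) (proj2 e14) (proj2 e05) q_01_45)) ]) | (case: n74 => h74; [ (exact: (leafF h01 h45 (proj2 e04) (proj2 e15) (proj2 e14) (proj2 e05) q_01_45)) | (exact: (leafF h01 h45 (proj2 e04) (proj2 e15) (proj2 e14) (proj2 e05) q_01_45)) ]) ]) ]) ]) ]) ]) ]) ]).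
Qed.

Theorem theorem2 :
  exists (V : finType) (e : rel V),
    [/\ simple_graph e, tolerance_graph e & ~ PCG e].
Proof.
exists 'I_8, e8; split.
- split.
  + by move=> x y; rewrite /e8 eq_sym minnC (minnC (rv x)) maxnC.
  + by move=> x; rewrite /e8 eqxx.
- exists (fun v => (lv v)%:R), (fun v => (rv v)%:R), (fun v => (tv v)%:R); split.
  + move=> v; rewrite ler_nat.
    by case: v => -[|[|[|[|[|[|[|[|//]]]]]]]].
  + by move=> v; rewrite ler0n.
  + by move=> x y xy; rewrite tol_nat /e8 xy.
- exact: not_pcg.
Qed.
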